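(* Let $u,v,w\in\mathfrak{S}_n$ with $v\le u\le w$, and let $1\le r\le n-1$ with $s_r\notin\mathrm{supp}(w)$. Then (1) $\underline{T}(u,[v,s_rw])=\underline{T}(u,[v,w])$ and $\underline{T}(u,[v,ws_r])=\underline{T}(u,[v,w])$; (2) $\overline{T}(u,[v,s_rw])=\overline{T}(u,[v,w])\cup\{(u^{-1}(r),u^{-1}(r+1))\}$; (3) $\overline{T}(u,[v,ws_r])=\overline{T}(u,[v,w])\cup\{(r,r+1)\}$; (4) $\overline{T}(s_ru,[v,s_rw])=\overline{T}(u,[v,w])$; (5) $\underline{T}(s_ru,[v,s_rw])=\underline{T}(u,[v,w])\cup\{(u^{-1}(r),u^{-1}(r+1))\}$; (6) $\overline{T}(us_r,[v,ws_r])=\{(s_r(i),s_r(j)) : (i,j)\in\overline{T}(u,[v,w])\}$; (7) $\underline{T}(us_r,[v,ws_r])=\{(s_r(i),s_r(j)) : (i,j)\in\underline{T}(u,[v,w])\}\cup\{(r,r+1)\}$.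
   Context: $\mathfrak{S}_n$ with simple transpositions $s_i=(i,i+1)$, length $\ell$, Bruhat order $\le$, and $[x,y]=\{u: x\le u\le y\}$. $\mathrm{supp}(w)$ is the set of simple transpositions occurring in a reduced decomposition of $w$. $T$ is the set of transpositions $(i,j)$ of $[n]$ (a transposition is identified with the unordered pair it swaps). Products are composition of permutations, so $u(i,j)$ denotes $u$ composed on the right with the transposition $(i,j)$. For $u\in[v,w]$: $\overline{T}(u,[v,w])=\{(i,j)\in T: u<u(i,j)\le w,\ \ell(u(i,j))-\ell(u)=1\}$ and $\underline{T}(u,[v,w])=\{(i,j)\in T: v\le u(i,j)<u,\ \ell(u)-\ell(u(i,j))=1\}$. *)

(* Defs.v *)
From mathcomp Require Import all_boot all_order all_fingroup.
Set Implicit Arguments. Unset Strict Implicit. Unset Printing Implicit Defensive.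

(* [n] = {1,...,n} is modelled by 'I_n = {0,...,n-1} (element k+1 <-> ordinal k).
   Permutations of [n] are {perm 'I_n}. *)
Section Bruhat.
Variable n : nat.
Local Notation P := {perm 'I_n}.

(* Composition of permutations: (pcompose u t) x = u (t x).  (MathComp's group
   product is left-to-right: (t * u) x = u (t x).) *)
Definition pcompose (u t : P) : P := (t * u)%g.

(* Coxeter length = number of inversions. *)
Definition len (u : P) : nat :=
  #|[set p : 'I_n * 'I_n | (p.1 < p.2) && (u p.2 < u p.1)]|.

Definition bstep (x y : P) : bool :=
  [exists p : 'I_n * 'I_n,
     [&& p.1 != p.2, y == pcompose x (tperm p.1 p.2) & len x < len y]].
Definition ble (x y : P) : bool := connect bstep x y.
Definition blt (x y : P) : bool := ble x y && (x != y).

Definition simple (t : P) : bool :=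
  [exists i : 'I_n, exists j : 'I_n, (val j == (val i).+1) && (t == tperm i j)].

Definition reduced_dec (w : P) (s : seq P) : bool :=
  [&& all simple s, size s == len w & foldr pcompose 1%g s == w].

Definition in_supp (t w : P) : Prop := exists s, reduced_dec w s /\ t \in s.

(* transposition (i,j) identified with the unordered pair, stored as the
   ordered pair (min, max) *)
Definition tpair (i j : 'I_n) : 'I_n * 'I_n := if i < j then (i, j) else (j, i).

Definition Tbar (u v w : P) : {set 'I_n * 'I_n} :=
  [set p : 'I_n * 'I_n | [&& p.1 < p.2,
      blt u (pcompose u (tperm p.1 p.2)), ble (pcompose u (tperm p.1 p.2)) w &
      len (pcompose u (tperm p.1 p.2)) == (len u).+1]].
Definition Tunder (u v w : P) : {set 'I_n * 'I_n} :=
  [set p : 'I_n * 'I_n | [&& p.1 < p.2,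
      ble v (pcompose u (tperm p.1 p.2)), blt (pcompose u (tperm p.1 p.2)) u &
      len u == (len (pcompose u (tperm p.1 p.2))).+1]].
End Bruhat.

(* Main.v *)
Require Import Defs.
From mathcomp Require Import all_boot all_order all_fingroup.
From mathcomp Require Import zify.
Ltac is_ord x := let _ := constr:(nat_of_ord x) in idtac.
Ltac ordz0 := try subst; repeat match goal with
  | H : is_true (_ && _) |- _ => let H1 := fresh "H" in let H2 := fresh "H" in case/andP: H => H1 H2
  | H : is_true (_ || _) |- _ => let H1 := fresh "H" in case/orP: H => H1
  | H : is_true (~~ (_ && _)) |- _ => rewrite negb_and in H
  | H : is_true (~~ (_ || _)) |- _ => rewrite negb_or in H
  | H : (_ = false) |- _ => move/negbT in H
  | H : ~ (@eq _ ?x ?y) |- _ => is_ord x; let H1 := fresh "H" in have H1 := introN eqP H; clear H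
  | H : is_true (@eq_op _ ?x _) |- _ => is_ord x; rewrite -val_eqE /= in H
  | H : is_true (~~ (@eq_op _ ?x _)) |- _ => is_ord x; rewrite -val_eqE /= in H
  | H : @eq _ ?x _ |- _ => is_ord x; move/(congr1 (@nat_of_ord _)) in H
  | |- @eq (prod _ _) (_, _) (_, _) => congr pair
  | |- is_true (_ && _) => apply/andP; split
  | |- is_true (@eq_op _ ?x _) => is_ord x; rewrite -val_eqE /=
  | |- is_true (~~ (@eq_op _ ?x _)) => is_ord x; rewrite -val_eqE /=
  | |- ~ (@eq _ ?x _) => is_ord x; let E := fresh "H" in move=> E; move/(congr1 (@nat_of_ord _)) in E
  | |- @eq _ ?x _ => is_ord x; apply: ord_inj
  end.
Ltac ordz := ordz0; lia.
Ltac tp := repeat (let E1 := fresh "E" in let E2 := fresh "E" in case: tpermP => [E1|E1|E1 E2]; try subst).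
Set Implicit Arguments. Unset Strict Implicit. Unset Printing Implicit Defensive.

Section Main.
Variable n : nat.
Local Notation P := {perm 'I_n}.

Definition invs (x : P) := [set p : 'I_n * 'I_n | (p.1 < p.2) && (x p.2 < x p.1)].
Lemma lenE x : len x = #|invs x|. Proof. by []. Qed.


Lemma F1 (x : P) (i j : 'I_n) : i < j -> x i < x j -> len x < len (pcompose x (tperm i j)).
Proof.
move=> lij xij.
rewrite !lenE /pcompose. set t := tperm i j. set y := (t * x)%g.
have yE k : y k = x (t k) by rewrite permM.
pose sp (p : 'I_n * 'I_n) := ((p.1 == i) && (i < p.2 < j)) || ((p.2 == j) && (i < p.1 < j)).
pose psi p := if sp p then p else (t p.1, t p.2).
have inj : {in invs x &, injective psi}.
  move=> [p1 p2] [q1 q2]; rewrite !inE /psi /sp /t /= => /andP[pl _] /andP[ql _].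
  case: ifP => /= H1; case: ifP => /= H2 [] E1 E2.
  - by subst.
  - move: H1 H2 E1 E2; tp; intros; ordz.
  - move: H1 H2 E1 E2; tp; intros; ordz.
  - by move: E1 E2 => /perm_inj -> /perm_inj ->.
have sub : psi @: invs x \subset invs y.
  apply/subsetP => q /imsetP[[p1 p2] pin ->]; move: pin; rewrite !inE /= yE => /andP[pl xp].
  rewrite /psi /sp /=; case: ifP => /= H; rewrite !yE /t.
    move: H xp; tp; intros; ordz.
  rewrite !tpermK; apply/andP; split => //.
    move: H xp; tp; intros; ordz.
have nin : (i, j) \notin psi @: invs x.
  apply/imsetP => -[[p1 p2]]; rewrite inE /= /psi /sp /= => /andP[pl _].
  case: ifP => /= H []; rewrite /t; tp; intros; ordz.
have ijin : (i, j) \in invs y by rewrite inE /= !yE /t tpermL tpermR lij.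
rewrite -(card_in_imset inj); apply: proper_card; apply/properP; split => //.
by exists (i, j).
Qed.

Lemma F2 (x : P) (i j : 'I_n) : nat_of_ord j = (nat_of_ord i).+1 -> x i < x j ->
  len (pcompose x (tperm i j)) = (len x).+1.
Proof.
move=> hij xij.
have lij : i < j by rewrite hij.
apply/eqP; rewrite eqn_leq F1 // andbT.
rewrite !lenE /pcompose. set t := tperm i j. set y := (t * x)%g.
have yE k : y k = x (t k) by rewrite permM.
pose psi (p : 'I_n * 'I_n) := (t p.1, t p.2).
have sub : invs y \subset psi @: invs x :|: [set (i, j)].
  apply/subsetP => -[q1 q2]; rewrite !inE /= !yE => /andP[ql xq].
  case: (boolP ((q1, q2) == (i, j))) => [/eqP ->|qne]; first by rewrite orbT.
  apply/orP; left; apply/imsetP; exists (t q1, t q2); last by rewrite /psi /= !tpermK.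
  rewrite inE /=; apply/andP; split => //.
  move: qne ql; rewrite xpair_eqE /t; tp; intros; ordz.
apply: (leq_trans (subset_leq_card sub)).
rewrite setUC cardsU1 -addn1 addnC; apply: leq_add; [exact: leq_imset_card | by case: (_ \notin _)].
Qed.

Lemma pcA (x y z : P) : pcompose x (pcompose y z) = pcompose (pcompose x y) z.
Proof. by rewrite /pcompose mulgA. Qed.
Lemma pcK (x : P) (i j : 'I_n) : pcompose (pcompose x (tperm i j)) (tperm i j) = x.
Proof. by rewrite /pcompose mulgA tperm2 mul1g. Qed.
Lemma pcE (x y : P) k : pcompose x y k = x (y k). Proof. by rewrite /pcompose permM. Qed.

Lemma lenV_le (x : P) : len x^-1 <= len x.
Proof.
rewrite !lenE.
pose g (p : 'I_n * 'I_n) := (x^-1%g p.2, x^-1%g p.1).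
have ginj : injective g by move=> [p1 p2] [q1 q2] [/perm_inj -> /perm_inj ->].
rewrite -(card_imset _ ginj); apply: subset_leq_card; apply/subsetP => q /imsetP[[p1 p2]].
by rewrite inE /= => /andP[pl xp] ->; rewrite inE /= !permKV xp pl.
Qed.
Lemma lenV (x : P) : len x^-1 = len x.
Proof. by apply/eqP; rewrite eqn_leq lenV_le /=; have := lenV_le x^-1; rewrite invgK. Qed.

Lemma bstepP (x y : P) : reflect (exists i j : 'I_n, [/\ i != j, y = pcompose x (tperm i j) & len x < len y]) (bstep x y).
Proof.
apply: (iffP existsP) => [[[i j] /and3P[ij /eqP -> l]]|[i [j [ij -> l]]]]; first by exists i, j.
by exists (i, j); rewrite /= ij eqxx l.
Qed.

Lemma F1conv (x : P) (i j : 'I_n) : i < j -> len x < len (pcompose x (tperm i j)) -> x i < x j.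
Proof.
move=> lij l. case: (ltngtP (x i) (x j)) => // [h|/ord_inj/perm_inj e]; last by move: lij; rewrite e ltnn.
set y := pcompose x (tperm i j).
have : len y < len (pcompose y (tperm i j)) by apply: F1 => //; rewrite !pcE tpermL tpermR.
by rewrite /y pcK ltnNge ltnW.
Qed.

Lemma bstep_ord (x y : P) : bstep x y ->
  exists i j : 'I_n, [/\ i < j, y = pcompose x (tperm i j) & x i < x j].
Proof.
case/bstepP => i [j [ij ey l]]; case: (ltngtP i j) => [h|h|/ord_inj e]; last by rewrite e eqxx in ij.
  by exists i, j; split => //; apply: F1conv => //; rewrite -ey.
by exists j, i; rewrite tpermC in ey; split => //; apply: F1conv => //; rewrite -ey.
Qed.

Lemma ble_len (x y : P) : ble x y -> x = y \/ len x < len y.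
Proof.
case/connectP => p; elim: p x => [|z p IH] x /=; first by move=> _ ->; left.
case/andP => /bstepP[i [j [_ _ l]]] /IH h /h [<-|l2]; right => //; exact: ltn_trans l2.
Qed.

Lemma ble_refl (x : P) : ble x x. Proof. exact: connect0. Qed.
Lemma ble_trans (x y z : P) : ble x y -> ble y z -> ble x z. Proof. exact: connect_trans. Qed.
Lemma bstep_ble (x y : P) : bstep x y -> ble x y. Proof. exact: connect1. Qed.

Lemma ble_ind (Q : P -> Prop) (y : P) : Q y ->
  (forall x z, bstep x z -> ble z y -> Q z -> Q x) -> forall x, ble x y -> Q x.
Proof.
move=> Qy st x /connectP[p]; elim: p x => [|z p IH] x /=; first by move=> _ <-.
case/andP => xz pz ey; apply: (st x z xz); last exact: IH.
by apply/connectP; exists p.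
Qed.

Section Par.
Variables (a b : 'I_n).
Hypothesis hab : nat_of_ord b = (nat_of_ord a).+1.

Definition PB (x : P) := [forall k : 'I_n, (k <= a) == (x k <= a)].
Lemma PBP x : PB x -> forall k : 'I_n, (k <= a) = (x k <= a).
Proof. by rewrite /PB => /forallP h k; move: (h k) => /eqP. Qed.

Lemma PB_step (x y : P) : bstep x y -> PB y -> PB x.
Proof.
move=> /bstep_ord[i [j [lij -> xij]]] /PBP py; apply/forallP => k; apply/eqP.
have yi := py i; have yj := py j; rewrite !pcE tpermL tpermR in yi yj.
have key : (i <= a) = (j <= a).
  move: yi yj; case: (leqP i a); case: (leqP j a); case: (leqP (x i) a); case: (leqP (x j) a) => //; lia.
have xk : x k = pcompose x (tperm i j) (tperm i j k) by rewrite pcE tpermK.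
by rewrite xk -py; case: tpermP => [->|->|].
Qed.

Lemma PB_down (x y : P) : ble x y -> PB y -> PB x.
Proof.
move=> h; apply: (@ble_ind (fun x => PB y -> PB x) y) h => // x' z st _ IH /IH.
exact: PB_step.
Qed.


Lemma conjT (y : P) (c d : 'I_n) : (y * tperm c d = tperm (y^-1 c) (y^-1 d) * y)%g.
Proof. by rewrite -tpermJ conjgE invgK !mulgA mulgKV. Qed.

Lemma bstep_inv (x y : P) : bstep x y -> bstep x^-1 y^-1.
Proof.
case/bstepP => i [j [ij ey l]]; apply/bstepP; exists (x i), (x j); split.
- by apply: contra ij => /eqP/perm_inj ->.
- by rewrite ey /pcompose invMg tpermV conjT invgK.
- by rewrite !lenV.
Qed.

Lemma ble_inv (x y : P) : ble x y -> ble x^-1 y^-1.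
Proof.
move=> h; apply: (@ble_ind (fun x => ble x^-1 y^-1) y) h; first exact: ble_refl.
move=> x' z st _ IH; apply: ble_trans IH; apply: bstep_ble; exact: bstep_inv.
Qed.

Definition s := tperm a b.
Definition Lm (x : P) := pcompose s x.
Definition Rm (x : P) := pcompose x s.

Lemma lab : a < b. Proof. by rewrite hab. Qed.
Lemma neab : a != b. Proof. by rewrite neq_ltn lab. Qed.
Lemma LmK (x : P) : Lm (Lm x) = x. Proof. by rewrite /Lm /pcompose -mulgA tperm2 mulg1. Qed.
Lemma RmK (x : P) : Rm (Rm x) = x. Proof. by rewrite /Rm pcK. Qed.
Lemma LmE (x : P) k : Lm x k = s (x k). Proof. by rewrite /Lm pcE. Qed.
Lemma RmE (x : P) k : Rm x k = x (s k). Proof. by rewrite /Rm pcE. Qed.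
Lemma LmV (x : P) : (Lm x)^-1%g = Rm x^-1. Proof. by rewrite /Lm /Rm /pcompose invMg /s tpermV. Qed.
Lemma RmV (x : P) : (Rm x)^-1%g = Lm x^-1. Proof. by rewrite /Lm /Rm /pcompose invMg /s tpermV. Qed.

Lemma lenR_cases (x : P) : (x a < x b /\ len (Rm x) = (len x).+1) \/ (x b < x a /\ len x = (len (Rm x)).+1).
Proof.
case: (ltngtP (x a) (x b)) => [h|h|/ord_inj/perm_inj e]; last by move: neab; rewrite e eqxx.
  by left; split => //; apply: F2.
right; split => //; have := @F2 (Rm x) a b hab; rewrite !RmE /s tpermL tpermR => /(_ h).
by rewrite -/s -/(Rm (Rm x)) RmK.
Qed.

Lemma lenL_cases (x : P) : (x^-1%g a < x^-1%g b /\ len (Lm x) = (len x).+1) \/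
   (x^-1%g b < x^-1%g a /\ len x = (len (Lm x)).+1).
Proof. by rewrite -(lenV (Lm x)) -(lenV x) LmV; apply: lenR_cases. Qed.

Lemma bstep_L (x : P) : len x < len (Lm x) -> bstep x (Lm x).
Proof.
move=> l; apply/bstepP; exists (x^-1%g a), (x^-1%g b); split => //.
- by apply: contra neab => /eqP/perm_inj ->.
- by rewrite /Lm /pcompose conjT.
Qed.

Lemma bstep_R (x : P) : len x < len (Rm x) -> bstep x (Rm x).
Proof. by move=> l; apply/bstepP; exists a, b; split => //; exact: neab. Qed.

Lemma PB_lt (x : P) : PB x -> x a < x b.
Proof.
move/PBP => h; have ha : x a <= a by rewrite -h.
have hb : a < x b by rewrite ltnNge -h -ltnNge lab.
exact: leq_ltn_trans ha hb.
Qed.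

Lemma PB_V (x : P) : PB x -> PB x^-1.
Proof. by move/PBP => h; apply/forallP => k; rewrite (h (x^-1%g k)) permKV. Qed.

Lemma PB_ltV (x : P) : PB x -> x^-1%g a < x^-1%g b.
Proof. by move/PB_V/PB_lt. Qed.

Lemma lenR_PB (x : P) : PB x -> len (Rm x) = (len x).+1.
Proof. by move/PB_lt => h; case: (lenR_cases x) => [[]|[h' _]] //; move: h; rewrite ltnNge ltnW. Qed.
Lemma lenL_PB (x : P) : PB x -> len (Lm x) = (len x).+1.
Proof. by move/PB_ltV => h; case: (lenL_cases x) => [[]|[h' _]] //; move: h; rewrite ltnNge ltnW. Qed.

Lemma PB_Lm (x : P) : PB x -> ~~ PB (Lm x).
Proof.
move=> px; apply/negP => /PBP h; have := h (x^-1%g a); rewrite LmE permKV /s tpermL.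
rewrite (PBP px) permKV leqnn hab ltnn. done.
Qed.
Lemma PB_Rm (x : P) : PB x -> ~~ PB (Rm x).
Proof. by move=> px; apply/negP => /PB_V; rewrite RmV; apply/negP/PB_Lm/PB_V. Qed.

Lemma ble_L (y : P) : PB y -> ble y (Lm y).
Proof. by move=> py; apply/bstep_ble/bstep_L; rewrite lenL_PB. Qed.
Lemma ble_R (y : P) : PB y -> ble y (Rm y).
Proof. by move=> py; apply/bstep_ble/bstep_R; rewrite lenR_PB. Qed.

Lemma mono_L (x y : P) : ble x y -> PB y -> ble (Lm x) (Lm y).
Proof.
move=> h; apply: (@ble_ind (fun x => PB y -> ble (Lm x) (Lm y)) y) h => [_|]; first exact: ble_refl.
move=> x' z st zy IH py; apply: ble_trans (IH py); apply: bstep_ble.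
have pz := PB_down zy py; have px := PB_step st pz.
case/bstepP: (st) => _ [_ [_ _ lxz]].
case/bstep_ord: st => i [j [lij ez _]]; apply/bstepP; exists i, j; split.
- by rewrite neq_ltn lij.
- by rewrite ez /Lm pcA.
- by rewrite !lenL_PB.
Qed.

Lemma mono_R (x y : P) : ble x y -> PB y -> ble (Rm x) (Rm y).
Proof.
move=> h py; have := mono_L (ble_inv h) (PB_V py).
by move/ble_inv; rewrite !LmV !invgK.
Qed.

Lemma G_L (x : P) (i j : 'I_n) : PB x -> PB (Lm (pcompose x (tperm i j))) ->
  ((x i == a) && (x j == b)) || ((x i == b) && (x j == a)).
Proof.
move=> px /PBP h; have hx := PBP px.
have Ha : (x^-1%g a == i) || (x^-1%g a == j).
  apply/negPn/negP; rewrite negb_or => /andP[n1 n2].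
  rewrite eq_sym in n1; rewrite eq_sym in n2.
  have := h (x^-1%g a); rewrite LmE pcE (tpermD n1 n2) permKV /s tpermL.
  by rewrite hx permKV leqnn hab ltnn.
have Hb : (x^-1%g b == i) || (x^-1%g b == j).
  apply/negPn/negP; rewrite negb_or => /andP[n1 n2].
  rewrite eq_sym in n1; rewrite eq_sym in n2.
  have := h (x^-1%g b); rewrite LmE pcE (tpermD n1 n2) permKV /s tpermR.
  by rewrite hx permKV leqnn hab ltnn.
have nab : x^-1%g a != x^-1%g b by apply: contra neab => /eqP/perm_inj ->.
case/orP: Ha => /eqP Ha; case/orP: Hb => /eqP Hb.
- by move: nab; rewrite Ha Hb eqxx.
- by rewrite -Ha -Hb !permKV !eqxx.
- by rewrite -Ha -Hb !permKV !eqxx orbT.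
- by move: nab; rewrite Ha Hb eqxx.
Qed.

Lemma G_R (x : P) (i j : 'I_n) : PB x -> PB (Rm (pcompose x (tperm i j))) ->
  ((i == a) && (j == b)) || ((i == b) && (j == a)).
Proof.
move=> px /PBP h; have hx := PBP px.
have Ha : (a == i) || (a == j).
  apply/negPn/negP; rewrite negb_or => /andP[n1 n2].
  have := h b; rewrite eq_sym in n1; rewrite eq_sym in n2.
  rewrite RmE pcE /s tpermR (tpermD n1 n2).
  by rewrite -hx leqnn hab ltnn.
have Hb : (b == i) || (b == j).
  apply/negPn/negP; rewrite negb_or => /andP[n1 n2].
  have := h a; rewrite eq_sym in n1; rewrite eq_sym in n2.
  rewrite RmE pcE /s tpermL (tpermD n1 n2).
  by rewrite -hx leqnn hab ltnn.
case/orP: Ha => /eqP Ha; case/orP: Hb => /eqP Hb.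
- by move: neab; rewrite Ha Hb eqxx.
- by rewrite -Ha -Hb !eqxx.
- by rewrite -Ha -Hb !eqxx orbT.
- by move: neab; rewrite Ha Hb eqxx.
Qed.

Lemma conj_eq (t u v : P) : (t ^ u)%g = v -> (t * u = u * v)%g.
Proof. by rewrite conjgE => <-; rewrite mulKVg. Qed.

Lemma LL (z : P) (i j : 'I_n) : i < j -> z i < z j -> z^-1%g a < z^-1%g b ->
  (pcompose z (tperm i j))^-1%g b < (pcompose z (tperm i j))^-1%g a ->
  ble z (Lm (pcompose z (tperm i j))).
Proof.
move=> lij zij lab' H.
have e k : (pcompose z (tperm i j))^-1%g k = tperm i j (z^-1%g k).
  by rewrite /pcompose invMg tpermV permM.
have zs : (z * s = tperm (z^-1%g a) (z^-1%g b) * z)%g by rewrite conjT.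
rewrite !e in H.
have Ha := permKV z a; have Hb := permKV z b.
move: (z^-1%g a) (z^-1%g b) lab' H Ha Hb zs => pa pb lab' H Ha Hb zs.
have LmE' : Lm (pcompose z (tperm i j)) = (tperm i j * (tperm pa pb * z))%g.
  by rewrite /Lm /pcompose -mulgA zs.
rewrite LmE'.
move: H; case: (tpermP i j pa) => [E1|E1|E1 E2]; case: (tpermP i j pb) => [E3|E3|E3 E4]; subst => H.
all: try (exfalso; ordz).
- by rewrite mulgA tperm2 mul1g; apply: ble_refl.
- (* pa = i, pb other *)
  have ipb : i < pb by [].
  have pbj : pb < j by [].
  have zjb : b < z j.
    have : z j != b by rewrite -Hb; apply/eqP => /perm_inj e0; exact: E4 (esym e0).
    move=> hne; ordz.
  have st1 : bstep z (pcompose z (tperm pb j)).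
    apply/bstepP; exists pb, j; split => //; first by rewrite neq_ltn pbj.
    by apply: F1 => //; rewrite Hb.
  have st2 : bstep (pcompose z (tperm pb j)) (pcompose (pcompose z (tperm pb j)) (tperm i pb)).
    apply/bstepP; exists i, pb; split => //; first by rewrite neq_ltn ipb.
    have n1 : pb != i by rewrite neq_ltn ipb orbT.
    have n2 : j != i by rewrite neq_ltn (ltn_trans ipb pbj) orbT.
    apply: F1 => //; rewrite !pcE tpermL (tpermD n1 n2) Ha.
    by apply: ltn_trans zjb; rewrite hab.
  have -> : (tperm i j * (tperm i pb * z))%g = pcompose (pcompose z (tperm pb j)) (tperm i pb).
    rewrite /pcompose !mulgA; congr (_ * _)%g; apply: conj_eq; apply: tpermJ_tperm.
      by rewrite neq_ltn lij.
    by rewrite neq_ltn pbj.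
  exact: ble_trans (bstep_ble st1) (bstep_ble st2).
- (* pb = j, pa other *)
  have ipa : i < pa by ordz.
  have paj : pa < j by [].
  have zia : z i < a.
    have : z i != a by rewrite -Ha; apply/eqP => /perm_inj e0; exact: E1 (esym e0).
    move=> hne; ordz.
  have st1 : bstep z (pcompose z (tperm i pa)).
    apply/bstepP; exists i, pa; split => //; first by rewrite neq_ltn ipa.
    by apply: F1 => //; rewrite Ha.
  have st2 : bstep (pcompose z (tperm i pa)) (pcompose (pcompose z (tperm i pa)) (tperm pa j)).
    apply/bstepP; exists pa, j; split => //; first by rewrite neq_ltn paj.
    have n1 : i != j by rewrite neq_ltn (ltn_trans ipa paj).
    have n2 : pa != j by rewrite neq_ltn paj.
    apply: F1 => //; rewrite !pcE tpermR (tpermD n1 n2) Hb.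
    by apply: (ltn_trans zia); rewrite hab.
  have -> : (tperm i j * (tperm pa j * z))%g = pcompose (pcompose z (tperm i pa)) (tperm pa j).
    rewrite /pcompose !mulgA; congr (_ * _)%g.
    rewrite (tpermC i j) (tpermC pa j) (tpermC i pa); apply: conj_eq; apply: tpermJ_tperm.
      by rewrite neq_ltn lij orbT.
    by rewrite neq_ltn ipa orbT.
  exact: ble_trans (bstep_ble st1) (bstep_ble st2).
Qed.


Lemma ble_Ldown (x : P) : len (Lm x) < len x -> ble (Lm x) x.
Proof. by move=> l; have := @bstep_L (Lm x); rewrite LmK => /(_ l) /bstep_ble. Qed.
Lemma ble_Rdown (x : P) : len (Rm x) < len x -> ble (Rm x) x.
Proof. by move=> l; have := @bstep_R (Rm x); rewrite RmK => /(_ l) /bstep_ble. Qed.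

Lemma liftL (y' z : P) : len (Lm y') < len y' -> ble z y' ->
  (len (Lm z) < len z -> ble (Lm z) (Lm y')) /\ (len z < len (Lm z) -> ble z (Lm y')).
Proof.
move=> ly h.
apply: (@ble_ind (fun z => (len (Lm z) < len z -> ble (Lm z) (Lm y')) /\
   (len z < len (Lm z) -> ble z (Lm y'))) y') h.
  split => [_|l]; first exact: ble_refl.
  by have := ltn_trans l ly; rewrite ltnn.
move=> x z' st _ [IH1 IH2].
case/bstepP: (st) => _ [_ [_ _ lxz]].
case/bstep_ord: (st) => i [j [lij ez xij]].
split => lx.
- case: (lenL_cases z') => [[_ lz]|[_ lz]].
  + apply: ble_trans (IH2 _); last by rewrite lz ltnSn.
    apply: ble_trans (bstep_ble st); exact: ble_Ldown.
  + apply: ble_trans (IH1 _); last by rewrite lz ltnSn.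
    apply: bstep_ble; apply/bstepP; exists i, j; split.
    * by rewrite neq_ltn lij.
    * by rewrite ez /Lm pcA.
    * have [[_ lx']|[_ lx']] := lenL_cases x; first by move: lx; rewrite lx' ltnNge leqnSn.
      by move: lxz; rewrite lx' lz ltnS.
- case: (lenL_cases z') => [[_ lz]|[lz' lz]].
  + by apply: ble_trans (IH2 _); [apply: bstep_ble | rewrite lz ltnSn].
  + apply: ble_trans (IH1 _); last by rewrite lz ltnSn.
    rewrite ez; apply: LL => //; last by rewrite -ez.
    have [[lx' _]|[_ lx']] := lenL_cases x => //.
    by move: lx; rewrite lx' ltnNge leqnSn.
Qed.

Lemma liftR (y' z : P) : len (Rm y') < len y' -> ble z y' ->
  (len (Rm z) < len z -> ble (Rm z) (Rm y')) /\ (len z < len (Rm z) -> ble z (Rm y')).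
Proof.
move=> ly h.
have eL : len (Lm z^-1%g) = len (Rm z) by rewrite -RmV lenV.
have := @liftL (y'^-1%g) (z^-1%g); rewrite -RmV !lenV eL => /(_ ly (ble_inv h)) [h1 h2].
split => l.
- by move: (h1 l) => /ble_inv; rewrite LmV !invgK.
- by move: (h2 l) => /ble_inv; rewrite !invgK.
Qed.

Lemma PB1 : PB 1%g.
Proof. by apply/forallP => k; rewrite perm1. Qed.

Lemma PB_mul (x y : P) : PB x -> PB y -> PB (pcompose x y).
Proof.
move=> /PBP hx /PBP hy; apply/forallP => k; apply/eqP.
by rewrite pcE -hx -hy.
Qed.

Lemma simple_PB (t : P) : simple t -> t != s -> PB t.
Proof.
case/existsP => i /existsP[j /andP[/eqP ej /eqP ->]] ne.
have nia : i != a.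
  apply: contra ne => /eqP ia; rewrite /s; apply/eqP; congr tperm => //.
  by apply: ord_inj; rewrite ej hab ia.
apply/forallP => k; apply/eqP.
have ej' : nat_of_ord j = (nat_of_ord i).+1 := ej.
case: tpermP => [->|->|//]; apply/idP/idP => h; ordz.
Qed.

Lemma foldr_PB (ss : seq P) : all (@simple n) ss -> s \notin ss -> PB (foldr (@pcompose n) 1%g ss).
Proof.
elim: ss => [|t ss IH] /=; first by rewrite PB1.
case/andP => st sts; rewrite in_cons negb_or => /andP[ts nss].
apply: PB_mul; [apply: simple_PB => //; by rewrite eq_sym | exact: IH].
Qed.


Lemma foldr_gen (ss : seq P) (z : P) : foldr (@pcompose n) z ss = pcompose (foldr (@pcompose n) 1%g ss) z.
Proof.
elim: ss => [|t ss IH] /=; first by rewrite /pcompose mulg1.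
by rewrite IH pcA.
Qed.

Lemma foldr_rcons' (ss : seq P) (t : P) :
  foldr (@pcompose n) 1%g (rcons ss t) = pcompose (foldr (@pcompose n) 1%g ss) t.
Proof. by rewrite foldr_rcons foldr_gen /pcompose mul1g. Qed.

Lemma descent (w : P) (i j : 'I_n) : i < j -> w j < w i ->
  exists k k' : 'I_n, nat_of_ord k' = (nat_of_ord k).+1 /\ w k' < w k.
Proof.
move: {2}(j - i) (erefl (j - i)) => d; elim: d i => [|d IH] i ed lij wji.
  by move: ed lij; lia.
have hi : i.+1 < n by apply: leq_ltn_trans (ltn_ord j).
pose i' := Ordinal hi.
case: (ltngtP (w i') (w i)) => [h|h|/ord_inj/perm_inj e].
- by exists i, i'.
- case: (ltngtP i' j) => [h2|h2|h2].
  + apply: (IH i') => //; first by rewrite /=; lia.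
    exact: ltn_trans wji h.
  + by move: h2 lij; rewrite /=; lia.
  + have ej : i' = j by apply: ord_inj.
    by move: h wji; rewrite ej => h3 h4; have := ltn_trans h3 h4; rewrite ltnn.
- by move: e; move/(congr1 (@nat_of_ord _)) => /=; lia.
Qed.

Lemma len0_inc (w : P) : len w = 0 -> forall i j : 'I_n, i < j -> w i < w j.
Proof.
move=> l0 i j lij; case: (ltngtP (w i) (w j)) => [//|h|/ord_inj/perm_inj e].
- have : (i, j) \in invs w by rewrite inE /= lij h.
  by move: l0; rewrite lenE => /eqP; rewrite cards_eq0 => /eqP ->; rewrite inE.
- by move: lij; rewrite e ltnn.
Qed.

Lemma inc_ge (w : P) : (forall i j : 'I_n, i < j -> w i < w j) -> forall k : 'I_n, k <= w k.
Proof.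
move=> inc; suff H : forall m (k : 'I_n), nat_of_ord k = m -> m <= w k by move=> k; exact: H _ k erefl.
elim=> [//|m IH] k ek.
have hm : m < n by apply: leq_ltn_trans (ltn_ord k); rewrite ek.
have := IH (Ordinal hm) erefl; have := inc (Ordinal hm) k; rewrite ek /= => /(_ (ltnSn _)).
by move=> h1 h2; apply: leq_ltn_trans h2 h1.
Qed.

Lemma len0_id (w : P) : len w = 0 -> w = 1%g.
Proof.
move=> l0; have inc := len0_inc l0.
have incV := @len0_inc (w^-1%g); rewrite lenV in incV; have {}incV := incV l0.
apply/permP => k; rewrite perm1; apply: ord_inj; apply/eqP; rewrite eqn_leq inc_ge // andbT.
by have := inc_ge incV (w k); rewrite permK.
Qed.

Lemma exists_red (w : P) : exists ss, reduced_dec w ss.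
Proof.
suff H : forall m (w : P), len w = m -> exists ss, reduced_dec w ss by exact: H _ w erefl.
elim=> [|m IH] {}w lw.
  by exists [::]; rewrite /reduced_dec /= lw eqxx (len0_id lw) eqxx.
have : 0 < len w by rewrite lw.
rewrite lenE card_gt0 => /set0Pn[[i j]]; rewrite inE /= => /andP[lij wji].
have [k [k' [ek wk]]] := descent lij wji.
set w' := pcompose w (tperm k k').
have lw' : len w = (len w').+1.
  have := @F2 w' k k' ek; rewrite !pcE tpermL tpermR => /(_ wk).
  by rewrite /w' pcK.
have [ss' /and3P[h1 /eqP h2 /eqP h3]] : exists ss, reduced_dec w' ss.
  apply: IH; move: lw; rewrite lw'; by case.
exists (rcons ss' (tperm k k')); apply/and3P; split.
- rewrite all_rcons h1 andbT; apply/existsP; exists k; apply/existsP; exists k'.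
  by rewrite eqxx andbT; apply/eqP; exact: ek.
- by rewrite size_rcons h2 lw'.
- by rewrite foldr_rcons' h3 /w' pcK.
Qed.

Lemma supp_PB (w : P) : ~ in_supp (tperm a b) w -> PB w.
Proof.
move=> ns; case: (boolP (PB w)) => // npw; exfalso; apply: ns.
have [ss hss] := exists_red w; exists ss; split => //.
case/and3P: hss => h1 _ /eqP h3.
apply/negPn/negP => nin; move: npw; rewrite -h3.
by rewrite (foldr_PB h1 nin).
Qed.

Lemma TbarE (u v w : P) (p : 'I_n * 'I_n) : (p \in Tbar u v w) =
  [&& p.1 < p.2, ble (pcompose u (tperm p.1 p.2)) w & len (pcompose u (tperm p.1 p.2)) == (len u).+1].
Proof.
rewrite inE; case: p => p1 p2 /=; apply/and4P/and3P => [[l _ bw le]|[l bw /eqP le]]; first by [].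
split => //; last by rewrite le.
apply/andP; split.
- apply/bstep_ble/bstepP; exists p1, p2; split => //; first by rewrite neq_ltn l.
  by rewrite le.
- by apply/eqP => e; move: le; rewrite -e => /eqP; rewrite -[X in X == _]addn0 -addn1 eqn_add2l.
Qed.

Lemma TunderE (u v w : P) (p : 'I_n * 'I_n) : (p \in Tunder u v w) =
  [&& p.1 < p.2, ble v (pcompose u (tperm p.1 p.2)) & len u == (len (pcompose u (tperm p.1 p.2))).+1].
Proof.
rewrite inE; case: p => p1 p2 /=; apply/and4P/and3P => [[l bv _ le]|[l bv /eqP le]]; first by [].
split => //; last by rewrite le.
apply/andP; split.
- apply/bstep_ble/bstepP; exists p1, p2; split => //; first by rewrite neq_ltn l.
  + by rewrite pcK.
  + by rewrite le.
- by apply/eqP => e; move: le; rewrite e => /eqP; rewrite -[X in X == _]addn0 -addn1 eqn_add2l.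
Qed.

Lemma tpair_ord (i j : 'I_n) : i < j -> tpair i j = (i, j).
Proof. by rewrite /tpair => ->. Qed.

Lemma tpair_lt (i j : 'I_n) : i != j -> (tpair i j).1 < (tpair i j).2.
Proof.
rewrite /tpair neq_ltn; case: ifP => //= h /orP[|//]; by rewrite h.
Qed.

Lemma tperm_tpair (i j : 'I_n) : tperm (tpair i j).1 (tpair i j).2 = tperm i j.
Proof. by rewrite /tpair; case: ifP => //= _; rewrite tpermC. Qed.

Lemma tpair_sym (i j : 'I_n) : tpair i j = tpair j i.
Proof.
rewrite /tpair; case: (ltngtP i j) => [h|h|/ord_inj ->] //.
all: try by rewrite ltnNge ltnW.
all: try by rewrite h.
Qed.

Lemma LmT (u : P) : Lm u = pcompose u (tperm (u^-1%g a) (u^-1%g b)).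
Proof. by rewrite /Lm /pcompose conjT. Qed.

Lemma pair_tpair (u : P) (p1 p2 : 'I_n) : p1 < p2 ->
  ((u p1 == a) && (u p2 == b)) || ((u p1 == b) && (u p2 == a)) ->
  (p1, p2) = tpair (u^-1%g a) (u^-1%g b).
Proof.
move=> l /orP[/andP[/eqP h1 /eqP h2]|/andP[/eqP h1 /eqP h2]];
  rewrite -h1 -h2 !permK; first by rewrite tpair_ord.
by rewrite tpair_sym tpair_ord.
Qed.

Lemma LmT_eq (u : P) (i j : 'I_n) :
  ((u i == a) && (u j == b)) || ((u i == b) && (u j == a)) -> Lm (pcompose u (tperm i j)) = u.
Proof.
move=> h; suff -> : pcompose u (tperm i j) = Lm u by rewrite LmK.
rewrite LmT; case/orP: h => /andP[/eqP <- /eqP <-]; rewrite !permK //.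
by rewrite tpermC.
Qed.

Lemma tperm_ab (q1 q2 : 'I_n) : q1 < q2 -> tperm q1 q2 = s -> (q1, q2) = (a, b).
Proof.
move=> l e; have := congr1 (fun t : P => t q1) e; rewrite /= tpermL /s.
case: tpermP => [e1 e2|e1 e2|e1 e2 e3].
- by rewrite e1 e2.
- by move: l; rewrite e1 e2; move: lab; ordz.
- by move: l; rewrite e3 ltnn.
Qed.

Lemma G_R_ab (u : P) (q1 q2 : 'I_n) : q1 < q2 ->
  ((q1 == a) && (q2 == b)) || ((q1 == b) && (q2 == a)) -> (q1, q2) = (a, b).
Proof.
move=> l /orP[/andP[/eqP -> /eqP ->]|/andP[/eqP e1 /eqP e2]] //.
by move: l lab; rewrite e1 e2; ordz.
Qed.

Lemma RmT (u : P) (q1 q2 : 'I_n) :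
  pcompose (Rm u) (tperm q1 q2) = Rm (pcompose u (tperm (s q1) (s q2))).
Proof.
by rewrite /Rm /pcompose -(tpermJ q1 q2 s) conjgE /s tpermV !mulgA tperm2 mul1g.
Qed.

Lemma claim2 (u v w : P) : PB w -> ble u w ->
  Tbar u v (Lm w) = Tbar u v w :|: [set tpair (u^-1%g a) (u^-1%g b)].
Proof.
move=> pw huw; have pu := PB_down huw pw.
apply/setP => -[p1 p2]; rewrite in_setU in_set1 !TbarE /=.
set x := pcompose u (tperm p1 p2).
apply/and3P/orP => [[l bx /eqP lx]|].
- have ly : len (Lm (Lm w)) < len (Lm w) by rewrite LmK lenL_PB.
  have [h1 h2] := liftL ly bx; rewrite LmK in h1 h2.
  case: (lenL_cases x) => [[_ e]|[_ e]].
  + by left; rewrite l h2 ?e ?ltnSn // lx eqxx.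
  + right; apply/eqP; apply: pair_tpair => //; apply: G_L => //.
    by apply: PB_down (h1 _) pw; rewrite e ltnSn.
- case => [/and3P[l bx lx]|/eqP e].
  + by split => //; apply: ble_trans bx (ble_L pw).
  + have l : p1 < p2.
      have := @tpair_lt (u^-1%g a) (u^-1%g b); rewrite -e; apply.
      by apply: contra neab => /eqP/perm_inj ->.
    have ex : x = Lm u by rewrite /x LmT -(tperm_tpair (u^-1%g a) (u^-1%g b)) -e.
    split => //; rewrite ex; [exact: mono_L | by rewrite lenL_PB].
Qed.

Lemma claim3 (u v w : P) : PB w -> ble u w ->
  Tbar u v (Rm w) = Tbar u v w :|: [set (a, b)].
Proof.
move=> pw huw; have pu := PB_down huw pw.
apply/setP => -[p1 p2]; rewrite in_setU in_set1 !TbarE /=.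
set x := pcompose u (tperm p1 p2).
apply/and3P/orP => [[l bx /eqP lx]|].
- have ly : len (Rm (Rm w)) < len (Rm w) by rewrite RmK (lenR_PB pw).
  have [h1 h2] := liftR ly bx; rewrite RmK in h1 h2.
  case: (lenR_cases x) => [[_ e]|[_ e]].
  + by left; rewrite l h2 ?e ?ltnSn // lx eqxx.
  + right; apply/eqP; apply: G_R_ab => //; apply: (G_R pu).
    by apply: PB_down (h1 _) pw; rewrite e ltnSn.
- case => [/and3P[l bx lx]|/eqP [e1 e2]].
  + by split => //; apply: ble_trans bx (ble_R pw).
  + subst p1 p2; rewrite /x -/s -/(Rm u); split; [exact: lab | exact: mono_R | by rewrite (lenR_PB pu)].
Qed.

Lemma claim4 (u v w : P) : PB w -> ble u w -> Tbar (Lm u) v (Lm w) = Tbar u v w.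
Proof.
move=> pw huw; have pu := PB_down huw pw.
apply/setP => -[p1 p2]; rewrite !TbarE /=.
set x := pcompose u (tperm p1 p2).
have e1 : pcompose (Lm u) (tperm p1 p2) = Lm x by rewrite /Lm pcA.
rewrite e1 (lenL_PB pu).
apply/and3P/and3P => [[l bx /eqP lx]|[l bx /eqP lx]].
- have ly : len (Lm (Lm w)) < len (Lm w) by rewrite LmK (lenL_PB pw).
  have [h1 h2] := liftL ly bx; rewrite !LmK in h1 h2.
  case: (lenL_cases x) => [[_ e]|[_ e]].
  + split => //; first by apply: h1; rewrite e ltnSn.
    by move: lx; rewrite e => -[->].
  + have px : PB (Lm x) by apply: PB_down (h2 _) pw; rewrite e ltnSn.
    have ex := LmT_eq (G_L pu px).
    by move: lx; rewrite -/x ex => /eqP; rewrite -addn2 -[X in X == _]addn0 eqn_add2l.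
- have px : PB x := PB_down bx pw.
  split => //; first exact: mono_L.
  by rewrite (lenL_PB px) lx.
Qed.

Lemma claim5 (u v w : P) : PB w -> ble v u -> ble u w ->
  Tunder (Lm u) v (Lm w) = Tunder u v w :|: [set tpair (u^-1%g a) (u^-1%g b)].
Proof.
move=> pw hvu huw; have pu := PB_down huw pw; have pv := PB_down hvu pu.
apply/setP => -[p1 p2]; rewrite in_setU in_set1 !TunderE /=.
set x := pcompose u (tperm p1 p2).
have e1 : pcompose (Lm u) (tperm p1 p2) = Lm x by rewrite /Lm pcA.
rewrite e1 (lenL_PB pu).
apply/and3P/orP => [[l bv /eqP lx]|].
- case: lx => lx.
  have ly : len (Lm (Lm u)) < len (Lm u) by rewrite LmK (lenL_PB pu).
  have bxu : ble (Lm x) (Lm u).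
    apply/bstep_ble/bstepP; exists p1, p2; split; first by rewrite neq_ltn l.
      by rewrite -e1 pcK.
    by rewrite (lenL_PB pu) -lx.
  have [h1 h2] := liftL ly bxu; rewrite !LmK in h1 h2.
  case: (lenL_cases x) => [[_ e]|[_ e]].
  + have hx : ble x u by apply: h1; rewrite e ltnSn.
    have px := PB_down hx pu.
    left; apply/and3P; split => //.
    * have ly2 : len (Lm (Lm x)) < len (Lm x) by rewrite LmK (lenL_PB px).
      have [_ h3] := liftL ly2 bv; rewrite LmK in h3; apply: h3; by rewrite (lenL_PB pv).
    * by rewrite lx e.
  + have hx : ble (Lm x) u by apply: h2; rewrite e ltnSn.
    case: (ble_len hx) => [ex|]; last by rewrite lx ltnn.
    right; apply/eqP; apply: pair_tpair => //; apply: G_L => //; by rewrite ex.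
- case => [/and3P[l bv /eqP lx]|/eqP e].
  + have hxu : ble x u.
      apply/bstep_ble/bstepP; exists p1, p2; split; [by rewrite neq_ltn l | by rewrite pcK | by rewrite lx].
    have px := PB_down hxu pu.
    split => //; first by apply: ble_trans bv (ble_L px).
    by rewrite (lenL_PB px) lx.
  + have l : p1 < p2.
      have := @tpair_lt (u^-1%g a) (u^-1%g b); rewrite -e; apply.
      by apply: contra neab => /eqP/perm_inj ->.
    have ex : x = Lm u by rewrite /x LmT -(tperm_tpair (u^-1%g a) (u^-1%g b)) -e.
    by split => //; rewrite ex LmK.
Qed.

Lemma sig_inv (p1 p2 : 'I_n) : p1 < p2 ->
  tpair (s (tpair (s p1) (s p2)).1) (s (tpair (s p1) (s p2)).2) = (p1, p2).
Proof.
move=> l; rewrite [tpair (s p1) _]/tpair; case: ifP => _ /=; rewrite !tpermK.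
  exact: tpair_ord.
by rewrite tpair_sym tpair_ord.
Qed.

Lemma sig_tperm (p1 p2 : 'I_n) :
  tperm (s (tpair (s p1) (s p2)).1) (s (tpair (s p1) (s p2)).2) = tperm p1 p2.
Proof. by rewrite /tpair; case: ifP => _ /=; rewrite !tpermK // tpermC. Qed.

Lemma s_neq (q1 q2 : 'I_n) : q1 < q2 -> s q1 != s q2.
Proof. by move=> l; apply/eqP => /perm_inj e; move: l; rewrite e ltnn. Qed.

Lemma claim6 (u v w : P) : PB w -> ble u w ->
  Tbar (Rm u) v (Rm w) = [set tpair (s p.1) (s p.2) | p in Tbar u v w].
Proof.
move=> pw huw; have pu := PB_down huw pw.
apply/setP => -[q1 q2]; rewrite TbarE /= RmT (lenR_PB pu).
set x := pcompose u (tperm (s q1) (s q2)).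
apply/and3P/imsetP => [[l bx /eqP lx]|[[p1 p2] hp eq]].
- exists (tpair (s q1) (s q2)); last by rewrite sig_inv.
  rewrite TbarE tperm_tpair -/x; apply/and3P; split; first by apply: tpair_lt; apply: s_neq.
  + have ly : len (Rm (Rm w)) < len (Rm w) by rewrite RmK (lenR_PB pw).
    have [h1 h2] := liftR ly bx; rewrite !RmK in h1 h2.
    case: (lenR_cases x) => [[_ e]|[_ e]]; first by apply: h1; rewrite e ltnSn.
    have px : PB (Rm x) by apply: PB_down (h2 _) pw; rewrite e ltnSn.
    have := G_R pu px; case/orP => /andP[/eqP e2 /eqP e3].
    * by move: lx; rewrite /x e2 e3 -/s -/(Rm u) RmK => /eqP; rewrite -addn2 -[X in X == _]addn0 eqn_add2l.
    * by move: lx; rewrite /x e2 e3 tpermC -/s -/(Rm u) RmK => /eqP; rewrite -addn2 -[X in X == _]addn0 eqn_add2l.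
  + case: (lenR_cases x) => [[_ e]|[_ e]]; first by move: lx; rewrite e => -[->].
    have ly : len (Rm (Rm w)) < len (Rm w) by rewrite RmK (lenR_PB pw).
    have [h1 h2] := liftR ly bx; rewrite !RmK in h1 h2.
    have px : PB (Rm x) by apply: PB_down (h2 _) pw; rewrite e ltnSn.
    have := G_R pu px; case/orP => /andP[/eqP e2 /eqP e3].
    * by move: lx; rewrite /x e2 e3 -/s -/(Rm u) RmK => /eqP; rewrite -addn2 -[X in X == _]addn0 eqn_add2l.
    * by move: lx; rewrite /x e2 e3 tpermC -/s -/(Rm u) RmK => /eqP; rewrite -addn2 -[X in X == _]addn0 eqn_add2l.
- move: hp; rewrite TbarE /= => /and3P[lp bp /eqP lp2].
  have ht : tperm (s q1) (s q2) = tperm p1 p2 by have := sig_tperm p1 p2; rewrite -eq.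
  have ex : x = pcompose u (tperm p1 p2) by rewrite /x ht.
  have py : PB (pcompose u (tperm p1 p2)) := PB_down bp pw.
  split.
  + by have := @tpair_lt (s p1) (s p2) (s_neq lp); rewrite -eq.
  + by rewrite ex; apply: mono_R.
  + by rewrite ex (lenR_PB py) lp2.
Qed.

Lemma claim7 (u v w : P) : PB w -> ble v u -> ble u w ->
  Tunder (Rm u) v (Rm w) = [set tpair (s p.1) (s p.2) | p in Tunder u v w] :|: [set (a, b)].
Proof.
move=> pw hvu huw; have pu := PB_down huw pw; have pv := PB_down hvu pu.
apply/setP => -[q1 q2]; rewrite in_setU in_set1 TunderE /= RmT (lenR_PB pu).
set x := pcompose u (tperm (s q1) (s q2)).
apply/and3P/orP => [[l bv /eqP lx]|].
- case: lx => lx.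
  have ly : len (Rm (Rm u)) < len (Rm u) by rewrite RmK (lenR_PB pu).
  have bxu : ble (Rm x) (Rm u).
    apply/bstep_ble/bstepP; exists q1, q2; split; first by rewrite neq_ltn l.
      by rewrite -RmT pcK.
    by rewrite (lenR_PB pu) -lx.
  have [h1 h2] := liftR ly bxu; rewrite !RmK in h1 h2.
  case: (lenR_cases x) => [[_ e]|[_ e]].
  + have hx : ble x u by apply: h1; rewrite e ltnSn.
    have px := PB_down hx pu.
    left; apply/imsetP; exists (tpair (s q1) (s q2)); last by rewrite sig_inv.
    rewrite TunderE tperm_tpair -/x; apply/and3P; split; first by apply: tpair_lt; apply: s_neq.
    * have ly2 : len (Rm (Rm x)) < len (Rm x) by rewrite RmK (lenR_PB px).
      have [_ h3] := liftR ly2 bv; rewrite RmK in h3; apply: h3; by rewrite (lenR_PB pv).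
    * by rewrite lx e.
  + have hx : ble (Rm x) u by apply: h2; rewrite e ltnSn.
    case: (ble_len hx) => [ex|]; last by rewrite lx ltnn.
    right; apply/eqP; apply: tperm_ab => //.
    have e2 : (tperm q1 q2 * Rm u)%g = (s * Rm u)%g.
      have e3 : Rm (Rm u) = (s * Rm u)%g by [].
      have e4 : pcompose (Rm u) (tperm q1 q2) = u by rewrite RmT -/x ex.
      by rewrite -e3 RmK; exact: e4.
    exact: mulIg e2.
- case => [/imsetP[[p1 p2] hp eq]|/eqP [e1 e2]].
  + move: hp; rewrite TunderE /= => /and3P[lp bp /eqP lp2].
    have ht : tperm (s q1) (s q2) = tperm p1 p2 by have := sig_tperm p1 p2; rewrite -eq.
    have ex : x = pcompose u (tperm p1 p2) by rewrite /x ht.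
    have hyu : ble (pcompose u (tperm p1 p2)) u.
      apply/bstep_ble/bstepP; exists p1, p2; split; [by rewrite neq_ltn lp | by rewrite pcK | by rewrite lp2].
    have py := PB_down hyu pu.
    split.
    * by have := @tpair_lt (s p1) (s p2) (s_neq lp); rewrite -eq.
    * by rewrite ex; apply: ble_trans bp (ble_R py).
    * by rewrite ex (lenR_PB py) lp2.
  + subst q1 q2.
    have ex : x = Rm u by rewrite /x /s tpermL tpermR tpermC.
    by split; [exact: lab | rewrite ex RmK | rewrite ex RmK].
Qed.

End Par.
End Main.

Theorem lemma5p6 (n : nat) (u v w : {perm 'I_n}) (a b : 'I_n) :
  val b = (val a).+1 ->
  ble v u -> ble u w ->
  ~ in_supp (tperm a b) w ->
  let sr := tperm a b in
  ((Tunder u v (pcompose sr w) = Tunder u v w /\ Tunder u v (pcompose w sr) = Tunder u v w) /\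
      Tbar u v (pcompose sr w) = Tbar u v w :|: [set tpair (u^-1%g a) (u^-1%g b)] /\
      Tbar u v (pcompose w sr) = Tbar u v w :|: [set (a, b)] /\
      Tbar (pcompose sr u) v (pcompose sr w) = Tbar u v w /\
      Tunder (pcompose sr u) v (pcompose sr w)
        = Tunder u v w :|: [set tpair (u^-1%g a) (u^-1%g b)] /\
      Tbar (pcompose u sr) v (pcompose w sr)
        = [set tpair (sr p.1) (sr p.2) | p in Tbar u v w] /\
      Tunder (pcompose u sr) v (pcompose w sr)
        = [set tpair (sr p.1) (sr p.2) | p in Tunder u v w] :|: [set (a, b)]).
Proof.
move=> hab' hvu huw ns sr.
have hab : nat_of_ord b = (nat_of_ord a).+1 := hab'.
have pw := supp_PB hab ns.
split; first by split.
split; first exact: (claim2 hab v pw huw).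
split; first exact: (claim3 hab v pw huw).
split; first exact: (claim4 hab v pw huw).
split; first exact: (claim5 hab pw hvu huw).
split; first exact: (claim6 hab v pw huw).
exact: (claim7 hab pw hvu huw).
Qed.
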